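(* Let $\mathcal{I}$ be a $\sigma$-ideal on $\mathbb{R}$ satisfying the standing assumptions, and let $L\subseteq\mathbb{R}$ be an $\mathcal{I}$-Luzin set which is linearly independent over $\mathbb{Q}$. Then there exists a set $X\subseteq\mathbb{R}$ such that the family $\{x+L:x\in X\}$ is a partition of $\mathbb{R}$ (its members are pairwise disjoint and cover $\mathbb{R}$).
   Context: Standing assumptions on $\mathcal{I}$: $\mathcal{I}$ is a $\sigma$-ideal of subsets of $\mathbb{R}$ such that $\mathbb{R}\notin\mathcal{I}$; $x+I\in\mathcal{I}$ and $xI\in\mathcal{I}$ for all $x\in\mathbb{R}$, $I\in\mathcal{I}$; every member of $\mathcal{I}$ is contained in a Borel member of $\mathcal{I}$; and for all Borel $A,B\notin\mathcal{I}$ the set $A-B$ has nonempty interior. A set $L\subseteq\mathbb{R}$ is $\mathcal{I}$-Luzin if $|L|=\mathfrak{c}$ and $L\cap I$ is countable for every $I\in\mathcal{I}$. *)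

(* Defs.v *)
From Stdlib Require Import Reals QArith Qreals List.
Open Scope R_scope.

Definition rset := R -> Prop.

Definition translate (x : R) (A : rset) : rset := fun y => exists a, A a /\ y = x + a.
Definition scale (x : R) (A : rset) : rset := fun y => exists a, A a /\ y = x * a.
Definition setdiffs (A B : rset) : rset := fun y => exists a b, A a /\ B b /\ y = a - b.

Definition nonempty_interior (A : rset) : Prop :=
  exists x eps, 0 < eps /\ forall y, Rabs (y - x) < eps -> A y.

Inductive Borel : rset -> Prop :=
  | Borel_interval : forall a b : R, Borel (fun y => a < y < b)
  | Borel_compl : forall A, Borel A -> Borel (fun y => ~ A y)
  | Borel_cunion : forall F : nat -> rset, (forall n, Borel (F n)) ->
                     Borel (fun y => exists n, F n y)
  | Borel_ext : forall A B, Borel A -> (forall y, A y <-> B y) -> Borel B.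

Definition sigma_ideal (I : rset -> Prop) : Prop :=
  I (fun _ => False) /\
  (forall A B : rset, I A -> (forall y, B y -> A y) -> I B) /\
  (forall F : nat -> rset, (forall n, I (F n)) -> I (fun y => exists n, F n y)).

Definition standing_assumptions (I : rset -> Prop) : Prop :=
  sigma_ideal I /\
  ~ I (fun _ => True) /\
  (forall x A, I A -> I (translate x A) /\ I (scale x A)) /\
  (forall A, I A -> exists B, Borel B /\ I B /\ forall y, A y -> B y) /\
  (forall A B, Borel A -> Borel B -> ~ I A -> ~ I B -> nonempty_interior (setdiffs A B)).

Definition countable (A : rset) : Prop :=
  exists f : R -> nat, forall x y, A x -> A y -> f x = f y -> x = y.

Definition has_card_continuum (A : rset) : Prop :=
  exists f : R -> R, (forall x y, f x = f y -> x = y) /\ (forall y, A y <-> exists x, f x = y).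

Definition I_Luzin (I : rset -> Prop) (L : rset) : Prop :=
  has_card_continuum L /\
  forall A, I A -> countable (fun y => L y /\ A y).

Fixpoint qcomb (l : list (Q * R)) : R :=
  match l with
  | nil => 0
  | (q, x) :: l' => Q2R q * x + qcomb l'
  end.

Definition Q_lin_indep (L : rset) : Prop :=
  forall l : list (Q * R),
    NoDup (map snd l) -> Forall (fun p => L (snd p)) l ->
    qcomb l = 0 -> Forall (fun p => Qeq (fst p) 0) l.

(* Main.v *)
Require Import Defs.
From Stdlib Require Import Reals QArith Qreals List.
From Stdlib Require Import Lra ClassicalEpsilon FunctionalExtensionality PropExtensionality.
Open Scope R_scope.

Fixpoint qcombF (h : R -> R) (l : list (Q * R)) : R :=
  match l with
  | nil => 0
  | (q, x) :: l' => Q2R q * h x + qcombF h l'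
  end.

Lemma qcomb_F l : qcomb l = qcombF (fun x => x) l.
Proof. induction l as [|[q x] l IH]; simpl; [reflexivity| rewrite IH; reflexivity]. Qed.

Lemma qcombF_app h l1 l2 : qcombF h (l1 ++ l2) = qcombF h l1 + qcombF h l2.
Proof. induction l1 as [|[q x] l IH]; simpl; [ring| rewrite IH; ring]. Qed.

Definition negl (l : list (Q * R)) := map (fun p => (Qopp (fst p), snd p)) l.

Lemma qcombF_neg h l : qcombF h (negl l) = - qcombF h l.
Proof. induction l as [|[q x] l IH]; simpl; [ring| rewrite IH, Q2R_opp; ring]. Qed.

Fixpoint merge (q : Q) (x : R) (l : list (Q * R)) : list (Q * R) :=
  match l with
  | nil => (q, x) :: nil
  | (q', x') :: l' => if Req_EM_T x x' then (Qplus q q', x') :: l'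
                      else (q', x') :: merge q x l'
  end.

Lemma merge_val h q x l : qcombF h (merge q x l) = Q2R q * h x + qcombF h l.
Proof.
  induction l as [|[q' x'] l IH]; simpl.
  - ring.
  - destruct (Req_EM_T x x') as [e|n]; simpl.
    + subst. rewrite Q2R_plus. ring.
    + rewrite IH. ring.
Qed.

Lemma merge_in q x l z : In z (map snd (merge q x l)) -> z = x \/ In z (map snd l).
Proof.
  induction l as [|[q' x'] l IH]; simpl.
  - intros [H|[]]; auto.
  - destruct (Req_EM_T x x') as [e|n]; simpl.
    + intros [H|H]; auto.
    + intros [H|H]; auto. destruct (IH H); auto.
Qed.

Lemma merge_nodup q x l : NoDup (map snd l) -> NoDup (map snd (merge q x l)).
Proof.
  induction l as [|[q' x'] l IH]; simpl; intros H.
  - constructor; [intros []| constructor].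
  - destruct (Req_EM_T x x') as [e|n]; simpl.
    + exact H.
    + inversion H; subst. constructor; auto.
      intros Hin. destruct (merge_in _ _ _ _ Hin); auto.
Qed.

Lemma merge_forall (P : R -> Prop) q x l :
  P x -> Forall (fun p => P (snd p)) l -> Forall (fun p => P (snd p)) (merge q x l).
Proof.
  induction l as [|[q' x'] l IH]; simpl; intros Hx H.
  - constructor; auto.
  - inversion H; subst. destruct (Req_EM_T x x'); constructor; auto.
Qed.

Fixpoint norm (l : list (Q * R)) : list (Q * R) :=
  match l with
  | nil => nil
  | (q, x) :: l' => merge q x (norm l')
  end.

Lemma norm_val h l : qcombF h (norm l) = qcombF h l.
Proof. induction l as [|[q x] l IH]; simpl; [reflexivity| rewrite merge_val, IH; reflexivity]. Qed.

Lemma norm_nodup l : NoDup (map snd (norm l)).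
Proof. induction l as [|[q x] l IH]; simpl; [constructor| apply merge_nodup; auto]. Qed.

Lemma norm_forall (P : R -> Prop) l :
  Forall (fun p => P (snd p)) l -> Forall (fun p => P (snd p)) (norm l).
Proof.
  induction l as [|[q x] l IH]; simpl; intros H; [constructor|].
  inversion H; subst. apply merge_forall; auto.
Qed.

Lemma zero_val h l : Forall (fun p => Qeq (fst p) 0) l -> qcombF h l = 0.
Proof.
  induction l as [|[q x] l IH]; simpl; intros H; [reflexivity|].
  inversion H; subst. rewrite IH by auto.
  simpl in H2. apply Qeq_eqR in H2. rewrite H2. unfold Q2R; simpl. ring.
Qed.

Lemma indep_val (L : rset) h : Q_lin_indep L -> forall l1 l2,
  Forall (fun p => L (snd p)) l1 -> Forall (fun p => L (snd p)) l2 ->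
  qcomb l1 = qcomb l2 -> qcombF h l1 = qcombF h l2.
Proof.
  intros HL l1 l2 H1 H2 E.
  set (l := l1 ++ negl l2).
  assert (Fl : Forall (fun p => L (snd p)) l).
  { unfold l. apply Forall_app; split; auto. unfold negl.
    apply Forall_map. eapply Forall_impl; [|exact H2]. simpl; auto. }
  assert (Z : qcomb (norm l) = 0).
  { rewrite qcomb_F, norm_val. unfold l. rewrite qcombF_app, qcombF_neg, <- !qcomb_F. lra. }
  pose proof (HL (norm l) (norm_nodup l) (norm_forall _ _ Fl) Z) as Q0.
  pose proof (zero_val h _ Q0) as Z2. rewrite norm_val in Z2. unfold l in Z2.
  rewrite qcombF_app, qcombF_neg in Z2. lra.
Qed.

Theorem mainTheorem14 (I : rset -> Prop) (L : rset) :
  standing_assumptions I ->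
  I_Luzin I L ->
  Q_lin_indep L ->
  exists X : rset,
    (forall y : R, exists x, X x /\ translate x L y) /\
    (forall x1 x2 : R, X x1 -> X x2 -> x1 <> x2 ->
       forall y, ~ (translate x1 L y /\ translate x2 L y)).
Proof.
  intros _ [[f [finj fL]] _] HL.
  set (FL := fun l : list (Q * R) => Forall (fun p => L (snd p)) l).
  set (g := fun z => epsilon (inhabits 0) (fun x => f x = z)).
  assert (fg : forall a, L a -> f (g a) = a).
  { intros a Ha. apply fL in Ha. unfold g. apply (epsilon_spec (inhabits 0) (fun x => f x = a)). exact Ha. }
  assert (gf : forall r, g (f r) = r).
  { intros r. apply finj. apply fg. apply fL. eauto. }
  set (V := fun v => exists l, FL l /\ qcomb l = v).
  assert (Vadd : forall a b, V a -> V b -> V (a + b)).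
  { intros a b [la [Fa Ea]] [lb [Fb Eb]]. exists (la ++ lb). split.
    - apply Forall_app; auto.
    - rewrite qcomb_F, qcombF_app, <- !qcomb_F. subst; reflexivity. }
  assert (Vneg : forall a, V a -> V (- a)).
  { intros a [la [Fa Ea]]. exists (negl la). split.
    - unfold FL, negl. apply Forall_map. eapply Forall_impl; [|exact Fa]. simpl; auto.
    - rewrite qcomb_F, qcombF_neg, <- qcomb_F. subst; reflexivity. }
  assert (V0 : V 0) by (exists nil; split; [constructor|reflexivity]).
  set (rep := fun y => epsilon (inhabits 0) (fun z => V (z - y))).
  assert (repV : forall y, V (rep y - y)).
  { intros y. unfold rep. apply (epsilon_spec (inhabits 0) (fun z => V (z - y))).
    exists y. replace (y - y) with 0 by ring. exact V0. }
  assert (repeq : forall y1 y2, V (y1 - y2) -> rep y1 = rep y2).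
  { intros y1 y2 H. unfold rep. f_equal. apply functional_extensionality. intros z.
    apply propositional_extensionality. split; intros Hz.
    - replace (z - y2) with ((z - y1) + (y1 - y2)) by ring. auto.
    - replace (z - y1) with ((z - y2) + - (y1 - y2)) by ring. auto. }
  set (K := fun k => exists l, FL l /\ qcomb l = k /\ qcombF g l = 0).
  exists (fun x => exists y k, K k /\ x = rep y + k).
  split.
  - intros y. destruct (repV y) as [l [Fl El]].
    set (b := f (- qcombF g l)).
    assert (Lb : L b) by (apply fL; exists (- qcombF g l); reflexivity).
    exists (rep y + (y - rep y - b)). split.
    + exists y, (y - rep y - b). split; [|reflexivity].
      exists (negl l ++ (Qopp 1%Q, b) :: nil). split; [|split].
      * apply Forall_app; split.
        -- unfold negl. apply Forall_map. eapply Forall_impl; [|exact Fl]. simpl; auto.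
        -- constructor; auto.
      * rewrite qcomb_F, qcombF_app, qcombF_neg, <- qcomb_F, El. simpl.
        rewrite Q2R_opp. unfold Q2R; simpl. field.
      * rewrite qcombF_app, qcombF_neg. simpl. unfold b. rewrite gf.
        rewrite Q2R_opp. unfold Q2R; simpl. field.
    + exists b. split; auto. ring.
  - intros x1 x2 [y1 [k1 [[m1 [F1 [E1 G1]]] ->]]] [y2 [k2 [[m2 [F2 [E2 G2]]] ->]]] Hne y
      [[a1 [La1 Ya1]] [a2 [La2 Ya2]]].
    apply Hne.
    assert (Vd : V (y1 - y2)).
    { assert (Vk : V (k2 + a2 - k1 - a1)).
      { exists (m2 ++ ((1%Q, a2) :: nil) ++ negl m1 ++ ((Qopp 1%Q, a1) :: nil)). split.
        - repeat (apply Forall_app; split); try (constructor; auto); auto.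
          unfold negl. apply Forall_map. eapply Forall_impl; [|exact F1]. simpl; auto.
        - rewrite qcomb_F, !qcombF_app, qcombF_neg, <- !qcomb_F, E1, E2. simpl.
          rewrite Q2R_opp. unfold Q2R; simpl. field. }
      replace (y1 - y2) with (((rep y1 - y1) * -1) + (k2 + a2 - k1 - a1) + (rep y2 - y2)).
      - apply Vadd; auto. apply Vadd; auto. replace ((rep y1 - y1) * -1) with (-(rep y1 - y1)) by ring. auto.
      - assert (rep y1 - rep y2 = k2 + a2 - k1 - a1) by lra. lra. }
    pose proof (repeq _ _ Vd) as Er. rewrite Er in *.
    assert (Eq : qcomb (m1 ++ (1%Q, a1) :: nil) = qcomb (m2 ++ (1%Q, a2) :: nil)).
    { rewrite !qcomb_F, !qcombF_app, <- !qcomb_F, E1, E2. simpl. unfold Q2R; simpl. lra. }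
    apply (indep_val L g HL) in Eq.
    2, 3: apply Forall_app; split; auto.
    rewrite !qcombF_app, G1, G2 in Eq. simpl in Eq. unfold Q2R in Eq; simpl in Eq.
    assert (ga : g a1 = g a2) by lra.
    assert (a1 = a2) by (rewrite <- (fg a1), <- (fg a2), ga; auto).
    subst a2. lra.
Qed.
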